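(* Let $m_1,m_2,m_3>0$ with $m_1+m_2+m_3=1$, and let $$\mathcal V=\{(m_1,m_2)\in(0,1)\times(0,1):\ m_1^2m_2^2+m_1^2m_3^2+m_2^2m_3^2-2m_1m_2m_3<0\},\qquad m_3=1-m_1-m_2 .$$ Then there exists an acute triangle fixed-point configuration of the masses $m_1,m_2,m_3$ only for mass triples with $(m_1,m_2)\in\mathcal V$ (and for every such triple one exists). Furthermore, such a configuration is unique.
   Context: Three masses $m_1,m_2,m_3$ are placed on the equator of the unit sphere $\mathbb S^2$ at longitudes $\varphi_1=0$, $\varphi_2=\alpha$, $\varphi_3=\alpha+\beta$, where $(\alpha,\beta)$ lies in $\mathcal U=\{0<\alpha<\pi,\ 0<\beta<\pi,\ \pi<\alpha+\beta<2\pi\}$; then the geodesic distances are $d_{12}=\alpha$, $d_{23}=\beta$, $d_{13}=2\pi-(\alpha+\beta)$ (these three points form an acute triangle in the plane). The force function is $V=\sum_{i<j}m_im_j\cot d_{ij}$ (with $d_{ij}=\arccos(\mathbf q_i\cdot\mathbf q_j)$ the geodesic distance on $\mathbb S^2$), and a fixed point is a configuration that is a critical point of $V$ on $\{(\mathbf q_1,\mathbf q_2,\mathbf q_3)\in(\mathbb S^2)^3: d_{ij}\notin\{0,\pi\}\}$. An acute triangle fixed-point configuration is such a configuration with $(\alpha,\beta)\in\mathcal U$ that is a fixed point; uniqueness refers to uniqueness of $(\alpha,\beta)\in\mathcal U$ (configurations are normalized by $\varphi_1=0<\varphi_2<\varphi_3<2\pi$, any other being obtained from such one by an isometry). *)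

(* Defs.v *)
From Stdlib Require Import Reals.
From Coquelicot Require Import Coquelicot.
Open Scope R_scope.

Definition vec3 : Type := (R * R * R)%type.
Definition dot (u v : vec3) : R :=
  let '(u1, u2, u3) := u in let '(v1, v2, v3) := v in u1 * v1 + u2 * v2 + u3 * v3.
Definition vadd (u v : vec3) : vec3 :=
  let '(u1, u2, u3) := u in let '(v1, v2, v3) := v in (u1 + v1, u2 + v2, u3 + v3).
Definition vscal (t : R) (u : vec3) : vec3 :=
  let '(u1, u2, u3) := u in (t * u1, t * u2, t * u3).

Definition on_sphere (q : vec3) : Prop := dot q q = 1.

Definition cot (x : R) : R := cos x / sin x.

Definition gdist (p q : vec3) : R := acos (dot p q).

(* force function V = sum_{i<j} m_i m_j cot d_ij, written via the dot products
   (this is also its natural smooth extension to a neighbourhood of the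
   configuration space in (R^3)^3) *)
Definition forceV (m1 m2 m3 : R) (q1 q2 q3 : vec3) : R :=
  m1 * m2 * cot (gdist q1 q2) + m1 * m3 * cot (gdist q1 q3)
  + m2 * m3 * cot (gdist q2 q3).

Definition nonsingular (q1 q2 q3 : vec3) : Prop :=
  on_sphere q1 /\ on_sphere q2 /\ on_sphere q3 /\
  gdist q1 q2 <> 0 /\ gdist q1 q2 <> PI /\
  gdist q1 q3 <> 0 /\ gdist q1 q3 <> PI /\
  gdist q2 q3 <> 0 /\ gdist q2 q3 <> PI.

(* fixed point: critical point of V on the manifold, i.e. the differential of V
   vanishes on every tangent vector (v1,v2,v3), v_i orthogonal to q_i. *)
Definition fixed_point (m1 m2 m3 : R) (q1 q2 q3 : vec3) : Prop :=
  nonsingular q1 q2 q3 /\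
  forall v1 v2 v3 : vec3,
    dot v1 q1 = 0 -> dot v2 q2 = 0 -> dot v3 q3 = 0 ->
    is_derive (fun t : R =>
                 forceV m1 m2 m3 (vadd q1 (vscal t v1)) (vadd q2 (vscal t v2))
                        (vadd q3 (vscal t v3))) 0 0.

Definition equator (phi : R) : vec3 := (cos phi, sin phi, 0).

Definition inU (a b : R) : Prop :=
  0 < a < PI /\ 0 < b < PI /\ PI < a + b < 2 * PI.

Definition acute_fixed_point (m1 m2 m3 a b : R) : Prop :=
  inU a b /\ fixed_point m1 m2 m3 (equator 0) (equator a) (equator (a + b)).

Definition inV (m1 m2 : R) : Prop :=
  let m3 := 1 - m1 - m2 in
  0 < m1 < 1 /\ 0 < m2 < 1 /\
  m1 ^ 2 * m2 ^ 2 + m1 ^ 2 * m3 ^ 2 + m2 ^ 2 * m3 ^ 2 - 2 * m1 * m2 * m3 < 0.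

(* Main.v *)
Require Import Defs.
From Stdlib Require Import Reals Lra Psatz.
From Coquelicot Require Import Coquelicot.
Open Scope R_scope.

Definition Hc (c : R) : R := / ((1 - c^2) * sqrt (1 - c^2)).

Lemma is_derive_eq (f : R -> R) x l l' : is_derive f x l -> l = l' -> is_derive f x l'.
Proof. intros H ->; exact H. Qed.

Lemma cotacos_deriv c : -1 < c < 1 -> is_derive (fun x => cot (acos x)) c (Hc c).
Proof.
  intros Hc1.
  assert (Hq : 0 < 1 - c^2) by nra.
  assert (Hs : sin (acos c) = sqrt (1 - c^2)).
  { rewrite sin_acos by lra. unfold Rsqr. f_equal. ring. }
  assert (Hco : cos (acos c) = c) by (apply cos_acos; lra).
  assert (Hsq : 0 < sqrt (1 - c^2)) by (apply sqrt_lt_R0; lra).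
  assert (Hss : sqrt (1 - c^2) * sqrt (1 - c^2) = 1 - c^2) by (apply sqrt_sqrt; lra).
  assert (Da : is_derive acos c (-1 / sqrt (1 - c^2))).
  { apply is_derive_Reals. apply (derive_pt_eq_1 _ _ _ (derivable_pt_acos c Hc1)).
    rewrite derive_pt_acos. unfold Rsqr. do 3 f_equal. ring. }
  assert (Dc : is_derive (fun y => cos y / sin y) (acos c) (- / (sin (acos c))^2)).
  { auto_derive. rewrite Hs; lra. rewrite Hs, Hco. replace (sqrt (1 - c ^ 2) ^ 2) with (1 - c^2) by (rewrite <- Hss at 1; ring).
    rewrite Hss. field. lra. }
  eapply is_derive_eq.
  - exact (is_derive_comp (fun y => cos y / sin y) acos c _ _ Dc Da).
  - unfold Hc. rewrite Hs. set (q := sqrt (1 - c^2)) in *.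
    rewrite <- Hss. unfold scal; simpl; unfold mult; simpl. field. lra.
Qed.

Lemma dot_path_deriv p q u w :
  is_derive (fun t => dot (vadd p (vscal t u)) (vadd q (vscal t w))) 0 (dot u q + dot p w).
Proof.
  destruct p as [[p1 p2] p3]; destruct q as [[q1 q2] q3];
  destruct u as [[u1 u2] u3]; destruct w as [[w1 w2] w3]; simpl.
  auto_derive; [exact I|]. ring.
Qed.

Lemma dot_path0 p q u w : dot (vadd p (vscal 0 u)) (vadd q (vscal 0 w)) = dot p q.
Proof.
  destruct p as [[p1 p2] p3]; destruct q as [[q1 q2] q3];
  destruct u as [[u1 u2] u3]; destruct w as [[w1 w2] w3]; simpl. ring.
Qed.

Lemma term_deriv p q u w : -1 < dot p q < 1 ->
  is_derive (fun t => cot (gdist (vadd p (vscal t u)) (vadd q (vscal t w)))) 0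
    (Hc (dot p q) * (dot u q + dot p w)).
Proof.
  intros H. unfold gdist.
  eapply is_derive_eq.
  - apply (is_derive_comp (fun x => cot (acos x))
      (fun t => dot (vadd p (vscal t u)) (vadd q (vscal t w)))).
    + rewrite dot_path0. apply cotacos_deriv; exact H.
    + apply dot_path_deriv.
  - simpl. unfold scal; simpl; unfold mult; simpl. ring.
Qed.

Lemma force_deriv m1 m2 m3 q1 q2 q3 v1 v2 v3 :
  -1 < dot q1 q2 < 1 -> -1 < dot q1 q3 < 1 -> -1 < dot q2 q3 < 1 ->
  is_derive (fun t => forceV m1 m2 m3 (vadd q1 (vscal t v1)) (vadd q2 (vscal t v2))
                        (vadd q3 (vscal t v3))) 0
   (m1 * m2 * (Hc (dot q1 q2) * (dot v1 q2 + dot q1 v2))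
    + m1 * m3 * (Hc (dot q1 q3) * (dot v1 q3 + dot q1 v3))
    + m2 * m3 * (Hc (dot q2 q3) * (dot v2 q3 + dot q2 v3))).
Proof.
  intros H12 H13 H23. unfold forceV.
  set (T1 := fun t => cot (gdist (vadd q1 (vscal t v1)) (vadd q2 (vscal t v2)))).
  set (T2 := fun t => cot (gdist (vadd q1 (vscal t v1)) (vadd q3 (vscal t v3)))).
  set (T3 := fun t => cot (gdist (vadd q2 (vscal t v2)) (vadd q3 (vscal t v3)))).
  change (is_derive (fun t => plus (plus (m1 * m2 * T1 t) (m1 * m3 * T2 t)) (m2 * m3 * T3 t)) 0
   (plus (plus (m1 * m2 * (Hc (dot q1 q2) * (dot v1 q2 + dot q1 v2)))
    (m1 * m3 * (Hc (dot q1 q3) * (dot v1 q3 + dot q1 v3))))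
    (m2 * m3 * (Hc (dot q2 q3) * (dot v2 q3 + dot q2 v3))))).
  apply (is_derive_plus (fun t => plus (m1 * m2 * T1 t) (m1 * m3 * T2 t)) (fun t => m2 * m3 * T3 t)).
  apply (is_derive_plus (fun t => m1 * m2 * T1 t) (fun t => m1 * m3 * T2 t)).
  all: apply is_derive_scal; apply term_deriv; assumption.
Qed.

Lemma Hc_val s c : 0 < s -> c^2 + s^2 = 1 -> Hc c = / s^3.
Proof.
  intros Hs Hcs. unfold Hc. replace (1 - c^2) with (s^2) by lra.
  rewrite sqrt_pow2 by lra. field. lra.
Qed.

Lemma is_derive_val (f : R -> R) x l l' : is_derive f x l -> is_derive f x l' -> l = l'.
Proof. intros H1 H2. rewrite <- (is_derive_unique f x l H1). apply is_derive_unique; exact H2. Qed.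

Definition FP (m1 m2 m3 : R) (q1 q2 q3 : vec3) : Prop :=
  forall v1 v2 v3 : vec3,
    dot v1 q1 = 0 -> dot v2 q2 = 0 -> dot v3 q3 = 0 ->
    is_derive (fun t : R =>
                 forceV m1 m2 m3 (vadd q1 (vscal t v1)) (vadd q2 (vscal t v2))
                        (vadd q3 (vscal t v3))) 0 0.

Lemma alg_fp (m1 m2 m3 c1 s1 c2 s2 C S : R) :
  0 < m1 -> 0 < m2 -> 0 < m3 ->
  c1^2 + s1^2 = 1 -> c2^2 + s2^2 = 1 -> C^2 + S^2 = 1 ->
  c1 * S - s1 * C = s2 -> c1 * C + s1 * S = c2 ->
  0 < s1 -> 0 < s2 -> S < 0 ->
  (FP m1 m2 m3 (1,0,0) (c1,s1,0) (C,S,0) <->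
   (m2 * S^2 = m3 * s1^2 /\ m1 * s2^2 = m3 * s1^2)).
Proof.
  intros Hm1 Hm2 Hm3 P1 P2 P3 R1 R2 Hs1 Hs2 HS.
  assert (D12 : dot (1,0,0) (c1,s1,0) = c1) by (simpl; ring).
  assert (D13 : dot (1,0,0) (C,S,0) = C) by (simpl; ring).
  assert (D23 : dot (c1,s1,0) (C,S,0) = c2) by (simpl; lra).
  assert (H12 : Hc c1 = / s1^3) by (apply Hc_val; lra).
  assert (H23 : Hc c2 = / s2^3) by (apply Hc_val; lra).
  assert (H13 : Hc C = / (-S)^3) by (apply Hc_val; lra).
  assert (B1 : -1 < c1 < 1) by nra.
  assert (B2 : -1 < c2 < 1) by nra.
  assert (B3 : -1 < C < 1) by nra.
  assert (Der : forall v1 v2 v3, is_derive (fun t : R =>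
                 forceV m1 m2 m3 (vadd (1,0,0) (vscal t v1)) (vadd (c1,s1,0) (vscal t v2))
                        (vadd (C,S,0) (vscal t v3))) 0
     (m1 * m2 * (/ s1^3 * (dot v1 (c1,s1,0) + dot (1,0,0) v2))
    + m1 * m3 * (/ (-S)^3 * (dot v1 (C,S,0) + dot (1,0,0) v3))
    + m2 * m3 * (/ s2^3 * (dot v2 (C,S,0) + dot (c1,s1,0) v3)))).
  { intros v1 v2 v3. rewrite <- H12, <- H23, <- H13, <- D12, <- D13, <- D23 at 1.
    apply force_deriv; rewrite ?D12, ?D13, ?D23; assumption. }
  split.
  - intros HF. split.
    + assert (E := is_derive_val _ _ _ _ (Der (0,1,0) (0,0,0) (0,0,0))
                     (HF (0,1,0) (0,0,0) (0,0,0) ltac:(simpl; ring) ltac:(simpl; ring) ltac:(simpl; ring))).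
      simpl in E.
      assert (E' : m1 * (m2 * S^2 - m3 * s1^2) / (s1^2 * S^2) = 0).
      { rewrite <- E. field. lra. }
      assert (m1 * (m2 * S^2 - m3 * s1^2) = 0).
      { apply (Rmult_eq_reg_r (/ (s1^2 * S^2))). rewrite Rmult_0_l. exact E'.
        apply Rinv_neq_0_compat. assert (0 < s1^2 * S^2) by (apply Rmult_lt_0_compat; nra). lra. }
      nra.
    + assert (E := is_derive_val _ _ _ _ (Der (0,0,0) (-s1,c1,0) (0,0,0))
                     (HF (0,0,0) (-s1,c1,0) (0,0,0) ltac:(simpl; ring) ltac:(simpl; ring) ltac:(simpl; ring))).
      simpl in E.
      replace (- s1 * C + c1 * S + 0 * 0 + (c1 * 0 + s1 * 0 + 0 * 0)) with s2 in E by lra.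
      assert (E' : m2 * (m3 * s1^2 - m1 * s2^2) / (s1^2 * s2^2) = 0).
      { rewrite <- E. field. lra. }
      assert (m2 * (m3 * s1^2 - m1 * s2^2) = 0).
      { apply (Rmult_eq_reg_r (/ (s1^2 * s2^2))). rewrite Rmult_0_l. exact E'.
        apply Rinv_neq_0_compat. assert (0 < s1^2 * s2^2) by (apply Rmult_lt_0_compat; nra). lra. }
      nra.
  - intros [E1 E2] [[x1 y1] z1] [[x2 y2] z2] [[x3 y3] z3] O1 O2 O3.
    simpl in O1, O2, O3.
    eapply is_derive_eq. apply Der.
    assert (Hx1 : x1 = 0) by lra. subst x1.
    assert (exists l, x2 = - l * s1 /\ y2 = l * c1) as [l [-> ->]].
    { exists (- x2 * s1 + y2 * c1). split.
      - assert (T : x2 + (- x2 * s1 + y2 * c1) * s1 = c1 * (x2 * c1 + y2 * s1 + z2 * 0) + x2 * (1 - (c1^2 + s1^2))) by ring.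
        rewrite O2, P1 in T. lra.
      - assert (T : y2 - (- x2 * s1 + y2 * c1) * c1 = s1 * (x2 * c1 + y2 * s1 + z2 * 0) + y2 * (1 - (c1^2 + s1^2))) by ring.
        rewrite O2, P1 in T. lra. }
    assert (exists l, x3 = - l * S /\ y3 = l * C) as [mu [-> ->]].
    { exists (- x3 * S + y3 * C). split.
      - assert (T : x3 + (- x3 * S + y3 * C) * S = C * (x3 * C + y3 * S + z3 * 0) + x3 * (1 - (C^2 + S^2))) by ring.
        rewrite O3, P3 in T. lra.
      - assert (T : y3 - (- x3 * S + y3 * C) * C = S * (x3 * C + y3 * S + z3 * 0) + y3 * (1 - (C^2 + S^2))) by ring.
        rewrite O3, P3 in T. lra. }
    assert (G1 : m1 * m2 / s1^2 = m1 * m3 / S^2).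
    { field_simplify_eq; [|lra]. replace (m1 * m2 * S^2) with (m1 * (m2 * S^2)) by ring. rewrite E1. ring. }
    assert (G2 : m1 * m2 / s1^2 = m2 * m3 / s2^2).
    { field_simplify_eq; [|lra]. replace (m1 * m2 * s2^2) with (m2 * (m1 * s2^2)) by ring.
      rewrite E2. ring. }
    simpl.
    transitivity (y1 * (m1 * m2 / s1^2 - m1 * m3 / S^2) - l * (m1 * m2 / s1^2 - m2 * m3 / s2^2)
      + mu * (m1 * m3 / S^2 - m2 * m3 / s2^2) + m2 * m3 / s2^3 * (l - mu) * (c1 * S - s1 * C - s2)).
    { field. lra. }
    rewrite R1, <- G1, <- G2. ring.
Qed.

Lemma pyth x : cos x ^ 2 + sin x ^ 2 = 1.
Proof. pose proof (sin2_cos2 x) as H. unfold Rsqr in H. lra. Qed.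

Lemma acos_ns x : -1 < x < 1 -> acos x <> 0 /\ acos x <> PI.
Proof. intros H. pose proof (acos_bound_lt x H). lra. Qed.

Lemma fp_equator m1 m2 m3 a b : 0 < m1 -> 0 < m2 -> 0 < m3 -> inU a b ->
  (fixed_point m1 m2 m3 (equator 0) (equator a) (equator (a + b)) <->
   (m2 * sin (a + b) ^ 2 = m3 * sin a ^ 2 /\ m1 * sin b ^ 2 = m3 * sin a ^ 2)).
Proof.
  intros Hm1 Hm2 Hm3 [Ha [Hb Hab]].
  assert (Hs1 : 0 < sin a) by (apply sin_gt_0; lra).
  assert (Hs2 : 0 < sin b) by (apply sin_gt_0; lra).
  assert (HS : sin (a + b) < 0) by (apply sin_lt_0; lra).
  pose proof (pyth a) as P1. pose proof (pyth b) as P2. pose proof (pyth (a + b)) as P3.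
  assert (R1 : cos a * sin (a + b) - sin a * cos (a + b) = sin b).
  { rewrite sin_plus, cos_plus.
    transitivity (sin b * (cos a ^ 2 + sin a ^ 2)); [ring|rewrite P1; ring]. }
  assert (R2 : cos a * cos (a + b) + sin a * sin (a + b) = cos b).
  { rewrite sin_plus, cos_plus.
    transitivity (cos b * (cos a ^ 2 + sin a ^ 2)); [ring|rewrite P1; ring]. }
  assert (Eq0 : equator 0 = (1, 0, 0)) by (unfold equator; rewrite cos_0, sin_0; reflexivity).
  pose proof (alg_fp m1 m2 m3 (cos a) (sin a) (cos b) (sin b) (cos (a+b)) (sin (a+b))
    Hm1 Hm2 Hm3 P1 P2 P3 R1 R2 Hs1 Hs2 HS) as A.
  unfold fixed_point. rewrite Eq0. unfold equator. rewrite <- A. unfold FP.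
  split; [intros [_ H]; exact H|].
  intros H; split; [|exact H].
  assert (B1 : -1 < cos a < 1) by nra.
  assert (B2 : -1 < cos b < 1) by nra.
  assert (B3 : -1 < cos (a+b) < 1) by nra.
  unfold nonsingular, on_sphere, gdist.
  replace (dot (1,0,0) (cos a, sin a, 0)) with (cos a) by (simpl; ring).
  replace (dot (1,0,0) (cos (a+b), sin (a+b), 0)) with (cos (a+b)) by (simpl; ring).
  replace (dot (cos a, sin a, 0) (cos (a+b), sin (a+b), 0)) with (cos b) by (simpl; lra).
  destruct (acos_ns _ B1). destruct (acos_ns _ B2). destruct (acos_ns _ B3).
  simpl. repeat split; try assumption; lra.
Qed.

Lemma sqrt_eq x y : 0 <= x -> x ^ 2 = y -> x = sqrt y.
Proof. intros H <-. rewrite sqrt_pow2; auto. Qed.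

Lemma sol_form m1 m2 m3 a b : 0 < m1 -> 0 < m2 -> 0 < m3 -> inU a b ->
  m2 * sin (a + b) ^ 2 = m3 * sin a ^ 2 -> m1 * sin b ^ 2 = m3 * sin a ^ 2 ->
  cos a = (sqrt (m3/m1) ^ 2 + sqrt (m3/m2) ^ 2 - 1) / (-2 * sqrt (m3/m1) * sqrt (m3/m2)) /\
  cos b = (sqrt (m3/m2) ^ 2 + 1 - sqrt (m3/m1) ^ 2) / (-2 * sqrt (m3/m2)).
Proof.
  intros Hm1 Hm2 Hm3 [Ha [Hb Hab]] E1 E2.
  assert (Hs1 : 0 < sin a) by (apply sin_gt_0; lra).
  assert (Hs2 : 0 < sin b) by (apply sin_gt_0; lra).
  assert (HS : sin (a + b) < 0) by (apply sin_lt_0; lra).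
  pose proof (pyth a) as P1. pose proof (pyth b) as P2. pose proof (pyth (a + b)) as P3.
  assert (R1 : cos a * sin (a + b) - sin a * cos (a + b) = sin b).
  { rewrite sin_plus, cos_plus.
    transitivity (sin b * (cos a ^ 2 + sin a ^ 2)); [ring|rewrite P1; ring]. }
  assert (R2 : cos a * cos (a + b) + sin a * sin (a + b) = cos b).
  { rewrite sin_plus, cos_plus.
    transitivity (cos b * (cos a ^ 2 + sin a ^ 2)); [ring|rewrite P1; ring]. }
  set (s1 := sin a) in *. set (s2 := sin b) in *. set (S := sin (a+b)) in *.
  set (c1 := cos a) in *. set (c2 := cos b) in *. set (C := cos (a+b)) in *.
  assert (Hx : s2 / s1 = sqrt (m3/m1)).
  { apply sqrt_eq. apply Rlt_le, Rdiv_lt_0_compat; lra.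
    field_simplify_eq; [|lra]. nra. }
  assert (Hy : - S / s1 = sqrt (m3/m2)).
  { apply sqrt_eq. apply Rlt_le, Rdiv_lt_0_compat; lra.
    field_simplify_eq; [|lra]. nra. }
  rewrite <- Hx, <- Hy.
  assert (K : S^2 - 2*S*c1*s2 + s2^2 = s1^2).
  { rewrite <- R1. replace (S^2 - 2*S*c1*(c1*S - s1*C) + (c1*S - s1*C)^2)
      with (S^2 * (1 - c1^2) + s1^2*C^2) by ring.
    replace (1 - c1^2) with (s1^2) by lra.
    transitivity (s1^2*(C^2+S^2)); [ring| rewrite P3; ring]. }
  assert (K2 : s1 * c2 = S - c1 * s2).
  { rewrite <- R2, <- R1.
    transitivity (S * (c1^2 + s1^2) - c1 * (c1 * S - s1 * C) + s1 * c1 * C - c1 * s1 * C + 0); [ring|].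
    rewrite P1. ring. }
  split.
  - field_simplify_eq; [nra|]. split; lra.
  - field_simplify_eq; [|split; lra]. nra.
Qed.

Lemma alg_ex X Y D u v : 0 < X -> 0 < Y -> X^2 = u -> Y^2 = v ->
  D * D = 2*(u+v+u*v) - 1 - u^2 - v^2 ->
  1 - ((u+v-1)/(-2*X*Y))^2 = (D/(2*X*Y))^2 /\
  1 - ((v+1-u)/(-2*Y))^2 = (D/(2*Y))^2 /\
  (D/(2*X*Y))*((v+1-u)/(-2*Y)) + ((u+v-1)/(-2*X*Y))*(D/(2*Y)) = -D/(2*X).
Proof.
  intros HX HY <- <- HD. split; [|split].
  - replace ((D/(2*X*Y))^2) with (D*D/(4*X^2*Y^2)) by (field; lra).
    rewrite HD. field. lra.
  - replace ((D/(2*Y))^2) with (D*D/(4*Y^2)) by (field; lra).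
    rewrite HD. field. lra.
  - field. lra.
Qed.

Lemma sin_acos_val c s : 0 < s -> 1 - c^2 = s^2 -> sin (acos c) = s /\ cos (acos c) = c /\ -1 < c < 1.
Proof.
  intros Hs H. assert (B : -1 < c < 1) by nra.
  split; [|split; [apply cos_acos; lra | exact B]].
  rewrite sin_acos by lra. unfold Rsqr.
  replace (1 - c * c) with (s^2) by lra. apply sqrt_pow2. lra.
Qed.

Theorem theorem1 (m1 m2 m3 : R) :
  0 < m1 -> 0 < m2 -> 0 < m3 -> m1 + m2 + m3 = 1 ->
  ((exists a b : R, acute_fixed_point m1 m2 m3 a b) <-> inV m1 m2) /\
  (forall a b a' b' : R,
     acute_fixed_point m1 m2 m3 a b -> acute_fixed_point m1 m2 m3 a' b' ->
     a = a' /\ b = b').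
Proof.
  intros Hm1 Hm2 Hm3 Hsum.
  assert (HXp : 0 < sqrt (m3/m1)) by (apply sqrt_lt_R0, Rdiv_lt_0_compat; lra).
  assert (HYp : 0 < sqrt (m3/m2)) by (apply sqrt_lt_R0, Rdiv_lt_0_compat; lra).
  assert (HX : sqrt (m3/m1) ^ 2 = m3/m1).
  { simpl. rewrite Rmult_1_r. apply sqrt_sqrt. apply Rlt_le, Rdiv_lt_0_compat; lra. }
  assert (HY : sqrt (m3/m2) ^ 2 = m3/m2).
  { simpl. rewrite Rmult_1_r. apply sqrt_sqrt. apply Rlt_le, Rdiv_lt_0_compat; lra. }
  remember (sqrt (m3/m1)) as X eqn:HeqX. remember (sqrt (m3/m2)) as Y eqn:HeqY.
  split; [split|].
  - intros [a [b [HU Hfp]]].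
    apply (fp_equator m1 m2 m3 a b Hm1 Hm2 Hm3 HU) in Hfp. destruct Hfp as [E1 E2].
    destruct (sol_form m1 m2 m3 a b Hm1 Hm2 Hm3 HU E1 E2) as [Ca _].
    rewrite <- HeqX, <- HeqY in Ca.
    destruct HU as [Ha _].
    assert (Hs1 : 0 < sin a) by (apply sin_gt_0; lra).
    pose proof (pyth a) as P1.
    rewrite HX, HY in Ca.
    assert (A : (m3/m1 + m3/m2 - 1)^2 < 4*X^2*Y^2).
    { replace (m3/m1 + m3/m2 - 1) with (cos a * (-2*X*Y)) by (rewrite Ca; field; lra).
      assert (0 < X^2*Y^2) by (apply Rmult_lt_0_compat; apply pow_lt; lra).
      assert (Hc2 : cos a ^ 2 < 1) by nra.
      replace ((cos a * (-2*X*Y))^2) with (cos a ^ 2 * (4 * X^2 * Y^2)) by ring.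
      nra. }
    rewrite HX, HY in A.
    assert (A' : (m3*m2 + m3*m1 - m1*m2)^2 < 4*m3^2*m1*m2).
    { replace ((m3*m2 + m3*m1 - m1*m2)^2) with ((m1^2*m2^2) * (m3/m1 + m3/m2 - 1)^2) by (field; lra).
      replace (4*m3^2*m1*m2) with ((m1^2*m2^2) * (4*(m3/m1)*(m3/m2))) by (field; lra).
      apply Rmult_lt_compat_l; [apply Rmult_lt_0_compat; apply pow_lt; lra|exact A]. }
    unfold inV. replace (1 - m1 - m2) with m3 by lra.
    split; [lra|split; [lra|]].
    replace (2*m1*m2*m3) with (2*m1*m2*m3*(m1+m2+m3)) by (rewrite Hsum; ring).
    nra.
  - intros HV. unfold inV in HV. replace (1 - m1 - m2) with m3 in HV by lra.
    destruct HV as [_ [_ HV]].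
    set (u := m3/m1). set (v := m3/m2).
    set (Q := 2*(u+v+u*v) - 1 - u^2 - v^2).
    assert (HQ : 0 < Q).
    { assert (E : Q * (m1^2*m2^2) = 2*m1*m2*m3*(m1+m2+m3)
         - (m1 ^ 2 * m2 ^ 2 + m1 ^ 2 * m3 ^ 2 + m2 ^ 2 * m3 ^ 2)).
      { unfold Q, u, v. field. lra. }
      rewrite Hsum in E.
      assert (0 < m1^2*m2^2) by nra. nra. }
    set (D := sqrt Q).
    assert (HDp : 0 < D) by (apply sqrt_lt_R0; exact HQ).
    assert (HD : D * D = Q) by (apply sqrt_sqrt; lra).
    destruct (alg_ex X Y D u v HXp HYp HX HY HD) as [F1 [F2 F3]].
    assert (Ps1 : 0 < D/(2*X*Y)) by (apply Rdiv_lt_0_compat; nra).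
    assert (Ps2 : 0 < D/(2*Y)) by (apply Rdiv_lt_0_compat; nra).
    destruct (sin_acos_val _ _ Ps1 F1) as [Sa [Ca Ba]].
    destruct (sin_acos_val _ _ Ps2 F2) as [Sb [Cb Bb]].
    set (a := acos ((u+v-1)/(-2*X*Y))) in *.
    set (b := acos ((v+1-u)/(-2*Y))) in *.
    assert (SS : sin (a + b) = - D / (2*X)).
    { rewrite sin_plus, Sa, Sb, Ca, Cb. exact F3. }
    pose proof (acos_bound_lt _ Ba) as Ia. pose proof (acos_bound_lt _ Bb) as Ib.
    fold a in Ia. fold b in Ib.
    assert (HU : inU a b).
    { split; [lra|split; [lra|split; [|lra]]].
      destruct (Rle_lt_dec (a + b) PI) as [Hle|Hlt]; [|exact Hlt].
      pose proof (sin_ge_0 (a+b) ltac:(lra) Hle).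
      assert (0 < D/(2*X)) by (apply Rdiv_lt_0_compat; nra).
      rewrite SS in H. unfold Rdiv in *. lra. }
    exists a, b. split; [exact HU|].
    apply (fp_equator m1 m2 m3 a b Hm1 Hm2 Hm3 HU).
    rewrite SS, Sa, Sb. split.
    + replace m3 with (m2 * Y^2) by (rewrite HY; unfold v; field; lra).
      field. lra.
    + replace m3 with (m1 * X^2) by (rewrite HX; unfold u; field; lra).
      field. lra.
  - intros a b a' b' [HU Hf] [HU' Hf'].
    apply (fp_equator m1 m2 m3 a b Hm1 Hm2 Hm3 HU) in Hf. destruct Hf as [E1 E2].
    apply (fp_equator m1 m2 m3 a' b' Hm1 Hm2 Hm3 HU') in Hf'. destruct Hf' as [E1' E2'].
    destruct (sol_form m1 m2 m3 a b Hm1 Hm2 Hm3 HU E1 E2) as [Ca Cb].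
    destruct (sol_form m1 m2 m3 a' b' Hm1 Hm2 Hm3 HU' E1' E2') as [Ca' Cb'].
    destruct HU as [Ha [Hb _]]. destruct HU' as [Ha' [Hb' _]].
    split; apply cos_inj; try lra; congruence.
Qed.
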